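(* For all $u\le v\in\mathbb{Z}^2$ and $\lambda\in(0,1)$: on the event $E_{\rightarrow}(\lambda;u,v)$, the path $\pi_-(u,v)$ is above $\pi_-(\lambda;u,v)$; and on the event $E_{\uparrow}(\lambda;u,v)$, the path $\pi_+(\lambda;u,v)$ is above $\pi_+(u,v)$.
   Context: Fix $p\in(0,1)$; bulk weights $(\omega_x)_{x\in\mathbb{Z}^2}$ i.i.d. with $\mathbb{P}(\omega_x=k)=p(1-p)^k$, $k\ge0$. $\mathbf{e}_1=(1,0),\mathbf{e}_2=(0,1),\mathbf{e}_+=(1,1)$; $u\le v$ coordinatewise; $R_{u,v}=[u_1,v_1]\times[u_2,v_2]$; $H_x=\mathbb{R}\times\{x_2\}$, $V_x=\{x_1\}\times\mathbb{R}$. Directed paths use steps $\mathbf{e}_1,\mathbf{e}_2$; $T(x,y)$ is the maximal weight $\sum_{z\in\gamma}\omega_z$ over directed paths from $x$ to $y$. Boundary weights for $\lambda\in(0,1)$: let $q(\lambda)=\frac{p\lambda+p\sqrt{(1-p)\lambda(1-\lambda)}}{1-p+p\lambda+2\sqrt{(1-p)\lambda(1-\lambda)}}$, $p_H=q(\lambda)$, $p_V=1-\frac{1-p}{1-q(\lambda)}$. For a base vertex $u$, take $(\omega^V_{u+j\mathbf{e}_2}(\lambda))_{j\in\mathbb{Z}}$ i.i.d. geometric with parameter $p_V$ independent of the bulk, set $L(u)=0$, $L(u+j\mathbf{e}_2)-L(u+(j-1)\mathbf{e}_2)=\omega^V_{u+j\mathbf{e}_2}(\lambda)$, for $x\in u+\mathbb{Z}_{>0}\times\mathbb{Z}$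 let $L(x)=\sup_{j\le x_2-u_2}[L(u+j\mathbf{e}_2)+T(u+\mathbf{e}_1+j\mathbf{e}_2,x)]$, and $\omega^H_x(\lambda)=L(x)-L(x-\mathbf{e}_1)$, $\omega^V_x(\lambda)=L(x)-L(x-\mathbf{e}_2)$. The law of $(\omega_x,\omega^H_x(\lambda),\omega^V_x(\lambda))$ converges as $u=(-m,-m)$, $m\to\infty$, to a law on all of $\mathbb{Z}^2$ whose restriction to each $u+\mathbb{Z}_{\ge0}^2$ agrees with the construction based at $u$; we work under this full-plane law. For a directed path $\gamma$ from $x$ to $y$, $T(\lambda;\gamma)=\sum_{z\in\gamma\cap H_x\setminus\{x\}}\omega^H_z(\lambda)+\sum_{z\in\gamma\cap V_x\setminus\{x\}}\omega^V_z(\lambda)+\sum_{z\in\gamma\cap R_{x+\mathbf{e}_+,y}}\omega_z$; $T(\lambda;x,y)$ is its maximum over directed paths from $x$ to $y$, and maximizers are $\lambda$-geodesics. A path $\gamma$ is above $\gamma'$ if for every vertical line $V$ meeting both, $\min(\gamma\cap V)\ge\min(\gamma'\cap V)$. $\pi_+(u,v)$, $\pi_-(u,v)$ are the upmost (above all others) and downmost geodesics for $T(u,v)$, and $\pi_\pm(\lambda;u,v)$ the analogous $\lambda$-geodesics. $E_{\rightarrow}(\lambda;u,v)=\{u+\mathbf{e}_1\in\pi_-(\lambda;u,v)\}$, $E_{\uparrow}(\lambda;u,v)=\{u+\mathbf{e}_2\in\pi_+(\lambda;u,v)\}$. *)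

(* Defs.v *)
From Stdlib Require Import ZArith List.
Import ListNotations.
Open Scope Z_scope.

Definition pt := (Z * Z)%type.
Definition e1 : pt := (1, 0).
Definition e2 : pt := (0, 1).
Definition padd (x y : pt) : pt := (fst x + fst y, snd x + snd y).
Definition psub (x y : pt) : pt := (fst x - fst y, snd x - snd y).

Definition ple (u v : pt) : Prop := fst u <= fst v /\ snd u <= snd v.

Fixpoint steps_ok (g : list pt) : Prop :=
  match g with
  | a :: ((b :: _) as t) => (b = padd a e1 \/ b = padd a e2) /\ steps_ok t
  | _ => True
  end.

Definition dpath (x y : pt) (g : list pt) : Prop :=
  head g = Some x /\ last g x = y /\ steps_ok g.

Definition bulk_weight (om : pt -> Z) (g : list pt) : Z :=
  fold_right (fun z s => om z + s) 0 g.

(* stationary boundary weights derived from the stationary LPP field L *)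
Definition omH (L : pt -> Z) (x : pt) : Z := L x - L (psub x e1).
Definition omV (L : pt -> Z) (x : pt) : Z := L x - L (psub x e2).

(* weight contributed by vertex z to T(lambda; gamma) for a path starting at x:
   z on H_x\{x} -> omega^H, z on V_x\{x} -> omega^V, z in R_{x+e_+,y} -> omega,
   and x itself contributes nothing *)
Definition lam_vertex (om : pt -> Z) (L : pt -> Z) (x z : pt) : Z :=
  if Z.eqb (snd z) (snd x) then (if Z.eqb (fst z) (fst x) then 0 else omH L z)
  else if Z.eqb (fst z) (fst x) then omV L z
  else om z.

Definition lam_weight (om : pt -> Z) (L : pt -> Z) (x : pt) (g : list pt) : Z :=
  fold_right (fun z s => lam_vertex om L x z + s) 0 g.

Definition geodesic (om : pt -> Z) (x y : pt) (g : list pt) : Prop :=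
  dpath x y g /\
  forall g', dpath x y g' -> bulk_weight om g' <= bulk_weight om g.

Definition lam_geodesic (om L : pt -> Z) (x y : pt) (g : list pt) : Prop :=
  dpath x y g /\
  forall g', dpath x y g' -> lam_weight om L x g' <= lam_weight om L x g.

(* g is above g': on every vertical line meeting both,
   min (g ∩ V) >= min (g' ∩ V) *)
Definition above (g g' : list pt) : Prop :=
  forall a b b', In (a, b) g -> In (a, b') g' ->
    exists b'', In (a, b'') g' /\ b'' <= b.

Definition upmost_geod (om : pt -> Z) (x y : pt) (g : list pt) : Prop :=
  geodesic om x y g /\ forall g', geodesic om x y g' -> above g g'.
Definition downmost_geod (om : pt -> Z) (x y : pt) (g : list pt) : Prop :=
  geodesic om x y g /\ forall g', geodesic om x y g' -> above g' g.
Definition upmost_lam_geod (om L : pt -> Z) (x y : pt) (g : list pt) : Prop :=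
  lam_geodesic om L x y g /\ forall g', lam_geodesic om L x y g' -> above g g'.
Definition downmost_lam_geod (om L : pt -> Z) (x y : pt) (g : list pt) : Prop :=
  lam_geodesic om L x y g /\ forall g', lam_geodesic om L x y g' -> above g' g.

(* Under the full-plane law of (omega, omega^H(lambda), omega^V(lambda)) this
   holds almost surely. *)
Definition stationary_config (om L : pt -> Z) : Prop :=
  forall x, L x = om x + Z.max (L (psub x e1)) (L (psub x e2)).

(* Main.v *)
Require Import Defs.
From Stdlib Require Import ZArith List Lia.
Import ListNotations.
Open Scope Z_scope.

Definition lev (p : pt) : Z := fst p + snd p.
Definition stp (a b : pt) : Prop :=
  (fst b = fst a + 1 /\ snd b = snd a) \/ (fst b = fst a /\ snd b = snd a + 1).

Lemma step_iff (a b : pt) : (b = padd a e1 \/ b = padd a e2) <-> stp a b.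
Proof.
  destruct a as [a1 a2], b as [b1 b2]; unfold padd, e1, e2, stp; simpl.
  split; intros [H|H].
  - left; inversion H; lia.
  - right; inversion H; lia.
  - left; destruct H; f_equal; lia.
  - right; destruct H; f_equal; lia.
Qed.

Lemma steps_cons a b t : steps_ok (a :: b :: t) <-> stp a b /\ steps_ok (b :: t).
Proof. cbn [steps_ok]. rewrite step_iff. tauto. Qed.

Lemma steps_tail a l : steps_ok (a :: l) -> steps_ok l.
Proof. destruct l; [simpl; tauto|]. intros H; apply steps_cons in H; tauto. Qed.

Lemma last_cons : forall (l : list pt) (a b : pt), last (b :: l) a = last l b.
Proof.
  induction l as [|c l IH]; intros a b; [reflexivity|].
  change (last (c :: l) a = last (c :: l) b). rewrite !IH. reflexivity.
Qed.

Lemma chain a l : steps_ok (a :: l) -> forall q, In q l ->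
  fst a <= fst q /\ snd a <= snd q /\ lev a < lev q.
Proof.
  revert a; induction l as [|b l IH]; intros a H q Hq; [destruct Hq|].
  apply steps_cons in H as [Hs H]. destruct Hq as [<-|Hq].
  - unfold stp, lev in *; lia.
  - specialize (IH b H q Hq). unfold stp, lev in *; lia.
Qed.

Lemma chain0 a l : steps_ok (a :: l) -> forall q, In q (a :: l) ->
  fst a <= fst q /\ snd a <= snd q /\ lev a <= lev q.
Proof.
  intros H q [<-|Hq]; [lia|]. pose proof (chain a l H q Hq); lia.
Qed.

Lemma llast a l : steps_ok (a :: l) -> forall q, In q (a :: l) ->
  fst q <= fst (last l a) /\ snd q <= snd (last l a) /\ lev q <= lev (last l a).
Proof.
  revert a; induction l as [|b l IH]; intros a H q Hq.
  - simpl in Hq. destruct Hq as [<-|[]]. simpl. lia.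
  - rewrite last_cons. pose proof H as H0. apply steps_cons in H0 as [Hs H'].
    destruct Hq as [<-|Hq].
    + specialize (IH b H' b (or_introl eq_refl)). unfold stp, lev in *; lia.
    + exact (IH b H' q Hq).
Qed.

Lemma F1 g : steps_ok g -> forall p q, In p g -> In q g -> lev p <= lev q ->
  fst p <= fst q /\ snd p <= snd q.
Proof.
  induction g as [|a l IH]; intros H p q Hp Hq Hl; [destruct Hp|].
  destruct Hp as [<-|Hp]; destruct Hq as [<-|Hq].
  - lia.
  - pose proof (chain _ _ H q Hq); lia.
  - pose proof (chain _ _ H p Hp); unfold lev in *; lia.
  - apply IH; auto. exact (steps_tail _ _ H).
Qed.

Lemma F3 a l : steps_ok (a :: l) -> forall s, lev a <= s <= lev (last l a) ->
  exists p, In p (a :: l) /\ lev p = s.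
Proof.
  revert a; induction l as [|b l IH]; intros a H s Hs.
  - simpl in Hs. exists a; split; [left; auto | lia].
  - rewrite last_cons in Hs. apply steps_cons in H as [Hst H'].
    destruct (Z.eq_dec s (lev a)).
    + exists a; split; [left|]; auto.
    + destruct (IH b H' s) as [p [Hp Hps]]; [unfold stp, lev in *; lia|].
      exists p; split; [right|]; auto.
Qed.

Lemma F4 a l : steps_ok (a :: l) -> forall c, fst a <= c <= fst (last l a) ->
  exists y, In (c, y) (a :: l).
Proof.
  revert a; induction l as [|b l IH]; intros a H c Hc.
  - simpl in Hc. exists (snd a). left. destruct a as [a1 a2]; simpl in *; f_equal; lia.
  - rewrite last_cons in Hc. apply steps_cons in H as [Hst H'].
    destruct (Z.eq_dec c (fst a)).
    + exists (snd a). left. destruct a as [a1 a2]; simpl in *; f_equal; lia.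
    + destruct (IH b H' c) as [y Hy]; [unfold stp in *; lia|].
      exists y; right; auto.
Qed.

Lemma levlast a l : steps_ok (a :: l) -> lev (last l a) = lev a + Z.of_nat (length l).
Proof.
  revert a; induction l as [|b l IH]; intros a H; [simpl; lia|].
  rewrite last_cons. apply steps_cons in H as [Hs H']. rewrite (IH b H').
  simpl length. unfold stp, lev in *; lia.
Qed.

Lemma dpath_inv u v g : dpath u v g -> exists l, g = u :: l /\ last l u = v /\ steps_ok (u :: l).
Proof.
  destruct g as [|a l]; unfold dpath; intros [H1 [H2 H3]]; [discriminate|].
  cbn [head] in H1. injection H1 as ->. exists l. rewrite last_cons in H2. auto.
Qed.

Lemma dF1 u v g : dpath u v g -> forall p q, In p g -> In q g -> lev p <= lev q ->
  fst p <= fst q /\ snd p <= snd q.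
Proof. intros [_ [_ H]]; apply F1; auto. Qed.

Lemma dF2 u v g : dpath u v g -> forall p, In p g ->
  fst u <= fst p <= fst v /\ snd u <= snd p <= snd v /\ lev u <= lev p <= lev v.
Proof.
  intros H p Hp. destruct (dpath_inv _ _ _ H) as [l [-> [Hl Hs]]].
  pose proof (chain0 _ _ Hs p Hp). pose proof (llast _ _ Hs p Hp). subst v. lia.
Qed.

Lemma dF3 u v g : dpath u v g -> forall s, lev u <= s <= lev v -> exists p, In p g /\ lev p = s.
Proof.
  intros H s Hs. destruct (dpath_inv _ _ _ H) as [l [-> [Hl Hst]]].
  apply F3; auto. subst v; auto.
Qed.

Lemma dF4 u v g : dpath u v g -> forall c, fst u <= c <= fst v -> exists y, In (c, y) g.
Proof.
  intros H c Hc. destruct (dpath_inv _ _ _ H) as [l [-> [Hl Hst]]].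
  apply F4; auto. subst v; auto.
Qed.

Definition sl (p q : pt) : Prop := lev p = lev q.

Lemma align a l b m : steps_ok (a :: l) -> steps_ok (b :: m) -> lev a = lev b ->
  length l = length m -> Forall2 sl (a :: l) (b :: m).
Proof.
  revert a b m; induction l as [|a' l IH]; intros a b m Ha Hb Hab Hlen;
    destruct m as [|b' m]; simpl in Hlen; try discriminate.
  - constructor; [exact Hab | constructor].
  - apply steps_cons in Ha as [Sa Ha]; apply steps_cons in Hb as [Sb Hb].
    constructor; [exact Hab|]. apply IH; auto. unfold stp, lev in *; lia.
Qed.

Lemma dpath_align u v g h : dpath u v g -> dpath u v h -> Forall2 sl g h.
Proof.
  intros Hg Hh.
  destruct (dpath_inv _ _ _ Hg) as [l [-> [Hl Hsl]]].
  destruct (dpath_inv _ _ _ Hh) as [m [-> [Hm Hsm]]].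
  apply align; auto.
  pose proof (levlast _ _ Hsl); pose proof (levlast _ _ Hsm). rewrite Hl in *; rewrite Hm in *.
  lia.
Qed.

Fixpoint zw (f : pt -> pt -> pt) (g h : list pt) : list pt :=
  match g, h with
  | a :: g', b :: h' => f a b :: zw f g' h'
  | _, _ => []
  end.

Definition low (p q : pt) : pt := if fst p <? fst q then q else p.
Definition high (p q : pt) : pt := if fst p <? fst q then p else q.

Lemma low_step p1 q1 p2 q2 : lev p1 = lev q1 -> stp p1 p2 -> stp q1 q2 ->
  stp (low p1 q1) (low p2 q2).
Proof.
  unfold low, stp, lev.
  destruct (Z.ltb_spec (fst p1) (fst q1)); destruct (Z.ltb_spec (fst p2) (fst q2)); lia.
Qed.

Lemma high_step p1 q1 p2 q2 : lev p1 = lev q1 -> stp p1 p2 -> stp q1 q2 ->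
  stp (high p1 q1) (high p2 q2).
Proof.
  unfold high, stp, lev.
  destruct (Z.ltb_spec (fst p1) (fst q1)); destruct (Z.ltb_spec (fst p2) (fst q2)); lia.
Qed.

Lemma low_id p : low p p = p.
Proof. unfold low; destruct (fst p <? fst p); reflexivity. Qed.
Lemma high_id p : high p p = p.
Proof. unfold high; destruct (fst p <? fst p); reflexivity. Qed.

Lemma zw_steps f (Hf : forall p1 q1 p2 q2, lev p1 = lev q1 -> stp p1 p2 -> stp q1 q2 ->
  stp (f p1 q1) (f p2 q2)) g h :
  Forall2 sl g h -> steps_ok g -> steps_ok h -> steps_ok (zw f g h).
Proof.
  intros HF; induction HF as [|a b g h Hab HF IH]; intros Hg Hh; [exact I|].
  inversion HF as [|a' b' g' h' Hab' HF']; subst.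
  - simpl; trivial.
  - apply steps_cons in Hg as [Sg Hg']; apply steps_cons in Hh as [Sh Hh'].
    change (steps_ok (f a b :: f a' b' :: zw f g' h')). apply steps_cons.
    split; [apply Hf; auto|]. apply IH; auto.
Qed.

Lemma zw_last f : forall l m a b, length l = length m ->
  last (zw f l m) (f a b) = f (last l a) (last m b).
Proof.
  induction l as [|a' l IH]; intros m a b Hlen; destruct m as [|b' m];
    simpl in Hlen; try discriminate; [reflexivity|].
  change (last (f a' b' :: zw f l m) (f a b) = f (last (a' :: l) a) (last (b' :: m) b)).
  rewrite !last_cons. apply IH. lia.
Qed.

Definition sumw (w : pt -> Z) (g : list pt) : Z := fold_right (fun z s => w z + s) 0 g.

Lemma zw_sum w : forall g h, length g = length h ->
  sumw w (zw low g h) + sumw w (zw high g h) = sumw w g + sumw w h.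
Proof.
  induction g as [|a g IH]; intros h Hlen; destruct h as [|b h]; simpl in Hlen;
    try discriminate; [reflexivity|].
  simpl. specialize (IH h ltac:(lia)).
  assert (w (low a b) + w (high a b) = w a + w b).
  { unfold low, high; destruct (fst a <? fst b); lia. }
  lia.
Qed.

Lemma zw_ge w f g h : Forall2 sl g h ->
  (forall p q, In p g -> In q h -> lev p = lev q -> w (f p q) >= w q) ->
  sumw w (zw f g h) >= sumw w h.
Proof.
  intros HF; induction HF as [|a b g h Hab HF IH]; intros Hw; simpl; [lia|].
  assert (w (f a b) >= w b) by (apply Hw; simpl; auto).
  assert (sumw w (zw f g h) >= sumw w h) by (apply IH; intros; apply Hw; simpl; auto).
  unfold sumw in *. lia.
Qed.

Lemma zw_In f g h : Forall2 sl g h -> steps_ok g -> steps_ok h ->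
  forall p q, In p g -> In q h -> lev p = lev q -> In (f p q) (zw f g h).
Proof.
  intros HF; induction HF as [|a b g h Hab HF IH]; intros Hg Hh p q Hp Hq Hl;
    [destruct Hp|].
  unfold sl in Hab.
  destruct Hp as [<-|Hp]; destruct Hq as [<-|Hq].
  - simpl; left; reflexivity.
  - pose proof (chain _ _ Hh q Hq); lia.
  - pose proof (chain _ _ Hg p Hp); lia.
  - simpl; right. apply IH; auto; eapply steps_tail; eauto.
Qed.

Lemma zw_dpath f u v g h
  (Hf : forall p1 q1 p2 q2, lev p1 = lev q1 -> stp p1 p2 -> stp q1 q2 ->
    stp (f p1 q1) (f p2 q2)) (Hid : forall p, f p p = p) :
  dpath u v g -> dpath u v h -> dpath u v (zw f g h).
Proof.
  intros Hg Hh. pose proof (dpath_align _ _ _ _ Hg Hh) as HF.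
  pose proof (Forall2_length HF) as Hlen.
  destruct (dpath_inv _ _ _ Hg) as [l [-> [Hl Hsl]]].
  destruct (dpath_inv _ _ _ Hh) as [m [-> [Hm Hsm]]].
  split; [|split].
  - simpl. rewrite Hid; reflexivity.
  - change (last (f u u :: zw f l m) u = v). rewrite last_cons.
    rewrite zw_last by (simpl in Hlen; lia). rewrite Hl, Hm. apply Hid.
  - apply zw_steps; auto.
Qed.

Definition Rright (g g' : list pt) : Prop :=
  forall p q, In p g -> In q g' -> lev p = lev q -> fst p <= fst q.

Lemma lem_i u v g g' : dpath u v g -> dpath u v g' -> Rright g g' -> above g g'.
Proof.
  intros Hg Hg' HR a b b' Hab Hab'.
  destruct (Z_le_gt_dec b' b) as [Hle|Hgt]; [exists b'; auto|].
  pose proof (dF2 _ _ _ Hg _ Hab) as H2.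
  destruct (dF3 _ _ _ Hg' (a + b)) as [q [Hq Hql]]; [unfold lev in *; simpl in *; lia|].
  pose proof (HR _ _ Hab Hq) as H3. unfold lev in *; simpl in *.
  pose proof (dF1 _ _ _ Hg' q (a, b') Hq Hab') as H4. unfold lev in H4; simpl in H4.
  destruct q as [q1 q2]; simpl in *.
  specialize (H3 ltac:(lia)). specialize (H4 ltac:(lia)).
  assert (q1 = a) by lia. assert (q2 = b) by lia. subst. exists b; split; auto; lia.
Qed.

Lemma lem_ii u v g g' : dpath u v g -> dpath u v g' -> above g g' -> Rright g g'.
Proof.
  intros Hg Hg' Hab p q Hp Hq Hl.
  destruct (Z_le_gt_dec (fst p) (fst q)) as [|Hgt]; auto. exfalso.
  pose proof (dF2 _ _ _ Hg _ Hp) as H2.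
  destruct (dF4 _ _ _ Hg' (fst p)) as [y Hy]; [lia|].
  assert (Hp' : In (fst p, snd p) g) by (rewrite <- surjective_pairing; auto).
  destruct (Hab _ _ _ Hp' Hy) as [b'' [Hb1 Hb2]].
  pose proof (dF1 _ _ _ Hg' _ q Hb1 Hq) as H4. unfold lev in *; simpl in *.
  specialize (H4 ltac:(lia)). lia.
Qed.

Section Main.
Variables (om L : pt -> Z) (u : pt).
Hypothesis Hst : stationary_config om L.

Definition E (z : pt) : Z := lam_vertex om L u z - om z.

Lemma lam_split g : sumw (lam_vertex om L u) g = sumw om g + sumw E g.
Proof. induction g; simpl; [lia|]. unfold sumw in *; unfold E at 1; lia. Qed.

Lemma omH_ge z : omH L z >= om z.
Proof. unfold omH. pose proof (Hst z). pose proof (Z.le_max_l (L (psub z e1)) (L (psub z e2))). lia. Qed.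
Lemma omV_ge z : omV L z >= om z.
Proof. unfold omV. pose proof (Hst z). pose proof (Z.le_max_r (L (psub z e1)) (L (psub z e2))). lia. Qed.

Lemma E_nonneg z : z <> u -> E z >= 0.
Proof.
  intros Hne. unfold E, lam_vertex.
  destruct (Z.eqb_spec (snd z) (snd u)); destruct (Z.eqb_spec (fst z) (fst u)).
  - exfalso; apply Hne; destruct z, u; simpl in *; subst; reflexivity.
  - pose proof (omH_ge z); lia.
  - pose proof (omV_ge z); lia.
  - lia.
Qed.

Lemma eq_of_lev p : fst u <= fst p -> snd u <= snd p -> lev p = lev u -> p = u.
Proof. destruct p, u; unfold lev; simpl; intros; f_equal; lia. Qed.

Lemma E_low p q : fst u <= fst p -> snd u <= snd p -> fst u <= fst q -> snd u <= snd q ->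
  lev p = lev q -> (q = u \/ fst q <> fst u) -> E (low p q) >= E q.
Proof.
  intros H1 H2 H3 H4 Hl Hq. unfold low.
  destruct (Z.ltb_spec (fst p) (fst q)); [lia|].
  destruct Hq as [->|Hne].
  - rewrite (eq_of_lev p); auto; lia.
  - destruct (Z.eq_dec (snd q) (snd u)).
    + assert (p = q). { destruct p, q; unfold lev in *; simpl in *; f_equal; lia. }
      subst; lia.
    + assert (E q = 0).
      { unfold E, lam_vertex.
        destruct (Z.eqb_spec (snd q) (snd u)); [contradiction|].
        destruct (Z.eqb_spec (fst q) (fst u)); [contradiction|]. lia. }
      assert (Hpu : p <> u).
      { intros ->. apply Hne. pose proof (eq_of_lev q H3 H4 (eq_sym Hl)). subst; reflexivity. }
      pose proof (E_nonneg p Hpu); lia.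
Qed.

Lemma E_high p q : fst u <= fst p -> snd u <= snd p -> fst u <= fst q -> snd u <= snd q ->
  lev p = lev q -> (q = u \/ snd q <> snd u) -> E (high p q) >= E q.
Proof.
  intros H1 H2 H3 H4 Hl Hq. unfold high.
  destruct (Z.ltb_spec (fst p) (fst q)); [|lia].
  destruct Hq as [->|Hne]; [lia|].
  destruct (Z.eq_dec (fst q) (fst u)); [lia|].
  assert (E q = 0).
  { unfold E, lam_vertex.
    destruct (Z.eqb_spec (snd q) (snd u)); [contradiction|].
    destruct (Z.eqb_spec (fst q) (fst u)); [contradiction|]. lia. }
  assert (Hpu : p <> u).
  { intros ->. pose proof (eq_of_lev q H3 H4 (eq_sym Hl)). subst; lia. }
  pose proof (E_nonneg p Hpu); lia.
Qed.

End Main.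

Lemma e1_prop u v P : dpath u v P -> In (padd u e1) P -> forall q, In q P -> q = u \/ fst q <> fst u.
Proof.
  intros H He q Hq. destruct (dpath_inv _ _ _ H) as [m [-> [_ Hs]]].
  destruct m as [|b m].
  - destruct He as [He|[]]. destruct u; unfold padd, e1 in He; simpl in He.
    inversion He; lia.
  - pose proof Hs as Hs'. apply steps_cons in Hs' as [Sb Hs'].
    destruct He as [He|He].
    + destruct u; unfold padd, e1 in He; simpl in He. inversion He; lia.
    + pose proof (chain0 _ _ Hs' _ He) as Hc. unfold padd, e1 in Hc; simpl in Hc.
      destruct Hq as [<-|Hq]; [left; auto|right].
      pose proof (chain0 _ _ Hs' _ Hq). unfold stp in Sb. lia.
Qed.

Lemma e2_prop u v P : dpath u v P -> In (padd u e2) P -> forall q, In q P -> q = u \/ snd q <> snd u.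
Proof.
  intros H He q Hq. destruct (dpath_inv _ _ _ H) as [m [-> [_ Hs]]].
  destruct m as [|b m].
  - destruct He as [He|[]]. destruct u; unfold padd, e2 in He; simpl in He.
    inversion He; lia.
  - pose proof Hs as Hs'. apply steps_cons in Hs' as [Sb Hs'].
    destruct He as [He|He].
    + destruct u; unfold padd, e2 in He; simpl in He. inversion He; lia.
    + pose proof (chain0 _ _ Hs' _ He) as Hc. unfold padd, e2 in Hc; simpl in Hc.
      destruct Hq as [<-|Hq]; [left; auto|right].
      pose proof (chain0 _ _ Hs' _ Hq). unfold stp in Sb. lia.
Qed.

Theorem lemma3p4 :
  forall (om L : pt -> Z), stationary_config om L ->
  forall (u v : pt), ple u v ->
    (forall pi pil : list pt,
       downmost_geod om u v pi -> downmost_lam_geod om L u v pil ->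
       In (padd u e1) pil -> above pi pil) /\
    (forall pi pil : list pt,
       upmost_geod om u v pi -> upmost_lam_geod om L u v pil ->
       In (padd u e2) pil -> above pil pi).
Proof.
  intros om L Hst u v Huv. split.
  - intros pi pil [[Hpi Gpi] _] [[Hpil Gpil] Dpil] He1.
    pose proof (dpath_align _ _ _ _ Hpi Hpil) as HF.
    pose proof (Forall2_length HF) as Hlen.
    assert (HM : dpath u v (zw low pi pil)) by (apply zw_dpath; auto; [exact low_step | exact low_id]).
    assert (HX : dpath u v (zw high pi pil)) by (apply zw_dpath; auto; [exact high_step | exact high_id]).
    pose proof (zw_sum om _ _ Hlen) as Hsum.
    pose proof (Gpi _ HX) as G1. change (sumw om (zw high pi pil) <= sumw om pi) in G1.
    assert (HE : sumw (E om L u) (zw low pi pil) >= sumw (E om L u) pil).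
    { apply zw_ge; auto. intros p q Hp Hq Hl.
      pose proof (dF2 _ _ _ Hpi _ Hp). pose proof (dF2 _ _ _ Hpil _ Hq).
      apply E_low; first [assumption | lia | exact (e1_prop u v pil Hpil He1 q Hq)]. }
    assert (geoM : lam_geodesic om L u v (zw low pi pil)).
    { split; auto. intros g' Hg'. specialize (Gpil g' Hg').
      change (sumw (lam_vertex om L u) g' <= sumw (lam_vertex om L u) (zw low pi pil)).
      change (sumw (lam_vertex om L u) g' <= sumw (lam_vertex om L u) pil) in Gpil.
      rewrite !lam_split in Gpil |- *. lia. }
    pose proof (Dpil _ geoM) as AB.
    pose proof (lem_ii _ _ _ _ HM Hpil AB) as R1.
    apply (lem_i u v); auto. intros p q Hp Hq Hl.
    assert (Hin : In (low p q) (zw low pi pil)).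
    { apply zw_In; auto; [destruct Hpi as [_ [_ ?]] | destruct Hpil as [_ [_ ?]]]; auto. }
    assert (Hl' : lev (low p q) = lev q) by (unfold low; destruct (fst p <? fst q); auto).
    pose proof (R1 _ _ Hin Hq Hl') as H.
    unfold low in H. destruct (Z.ltb_spec (fst p) (fst q)); lia.
  - intros pi pil [[Hpi Gpi] _] [[Hpil Gpil] Upil] He2.
    pose proof (dpath_align _ _ _ _ Hpi Hpil) as HF.
    pose proof (Forall2_length HF) as Hlen.
    assert (HM : dpath u v (zw low pi pil)) by (apply zw_dpath; auto; [exact low_step | exact low_id]).
    assert (HX : dpath u v (zw high pi pil)) by (apply zw_dpath; auto; [exact high_step | exact high_id]).
    pose proof (zw_sum om _ _ Hlen) as Hsum.
    pose proof (Gpi _ HM) as G1. change (sumw om (zw low pi pil) <= sumw om pi) in G1.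
    assert (HE : sumw (E om L u) (zw high pi pil) >= sumw (E om L u) pil).
    { apply zw_ge; auto. intros p q Hp Hq Hl.
      pose proof (dF2 _ _ _ Hpi _ Hp). pose proof (dF2 _ _ _ Hpil _ Hq).
      apply E_high; first [assumption | lia | exact (e2_prop u v pil Hpil He2 q Hq)]. }
    assert (geoX : lam_geodesic om L u v (zw high pi pil)).
    { split; auto. intros g' Hg'. specialize (Gpil g' Hg').
      change (sumw (lam_vertex om L u) g' <= sumw (lam_vertex om L u) (zw high pi pil)).
      change (sumw (lam_vertex om L u) g' <= sumw (lam_vertex om L u) pil) in Gpil.
      rewrite !lam_split in Gpil |- *. lia. }
    pose proof (Upil _ geoX) as AB.
    pose proof (lem_ii _ _ _ _ Hpil HX AB) as R1.
    apply (lem_i u v); auto. intros q p Hq Hp Hl.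
    assert (Hin : In (high p q) (zw high pi pil)).
    { apply zw_In; auto; [destruct Hpi as [_ [_ ?]] | destruct Hpil as [_ [_ ?]]]; auto. }
    assert (Hl' : lev q = lev (high p q)) by (unfold high; destruct (fst p <? fst q); auto).
    pose proof (R1 _ _ Hq Hin Hl') as H.
    unfold high in H. destruct (Z.ltb_spec (fst p) (fst q)); lia.
Qed.
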